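(* Let $A\in\mathbb{R}^{m\times n}$ be semimonotone ($A^{\dagger}\geq 0$) and let $A=U_1-V_1=U_2-V_2$ be two convergent proper nonnegative splittings of different types (one of type I and the other of type II). If there exists $\alpha$ with $0<\alpha\leq 1$ such that $V_1\leq \alpha V_2$ and $\rho(A^{\dagger}V_i)>0$ for $i=1$ or $i=2$, then $\rho(U_1^{\dagger}V_1)\leq\rho(U_2^{\dagger}V_2)<1$ whenever $\alpha=1$, and $\rho(U_1^{\dagger}V_1)<\rho(U_2^{\dagger}V_2)<1$ whenever $0<\alpha<1$.
   Context: $A^{\dagger}$ denotes the Moore–Penrose inverse and $\rho(\cdot)$ the spectral radius. Inequalities are entrywise. A splitting $A=U-V$ is proper if $R(U)=R(A)$ and $N(U)=N(A)$; it is convergent if $\rho(U^{\dagger}V)<1$. A proper splitting is a proper nonnegative splitting of type I if $U^{\dagger}V\geq 0$, and of type II if $VU^{\dagger}\geq 0$. *)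

(* Defs.v *)
From HB Require Import structures.
From mathcomp Require Import all_boot all_order all_algebra.
From mathcomp Require Import complex.
Set Implicit Arguments. Unset Strict Implicit. Unset Printing Implicit Defensive.
Import Order.TTheory GRing.Theory Num.Theory.
Local Open Scope ring_scope.

Section Defs.
Variable R : rcfType.

Definition is_MP_inverse m n (A : 'M[R]_(m, n)) (X : 'M[R]_(n, m)) : Prop :=
  [/\ A *m X *m A = A, X *m A *m X = X,
      (A *m X)^T = A *m X & (X *m A)^T = X *m A].

Definition mx_nonneg m n (M : 'M[R]_(m, n)) : Prop := forall i j, 0 <= M i j.

Definition mx_le m n (M N : 'M[R]_(m, n)) : Prop := forall i j, M i j <= N i j.

(* spectral radius: the largest modulus of a (complex) eigenvalue, i.e. of a
   root of the characteristic polynomial over R[i] (0 for the empty matrix). *)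
Definition spectral_radius n (M : 'M[R]_n) : R :=
  \big[Num.max/0]_(z <- sval (closed_field_poly_normal
                       (char_poly (map_mx (real_complex R) M)))) ComplexField.Normc.normc z.

(* range space R(M) = column space *)
Definition range_eq m n (U A : 'M[R]_(m, n)) : Prop := (U^T == A^T)%MS.

Definition null_eq m n (U A : 'M[R]_(m, n)) : Prop :=
  forall x : 'cV[R]_n, U *m x = 0 <-> A *m x = 0.

Definition proper_splitting m n (A U V : 'M[R]_(m, n)) : Prop :=
  A = U - V /\ range_eq U A /\ null_eq U A.

Definition convergent_splitting m n (U V : 'M[R]_(m, n)) (Ud : 'M[R]_(n, m)) : Prop :=
  spectral_radius (Ud *m V) < 1.

Definition pns_typeI m n (A U V : 'M[R]_(m, n)) (Ud : 'M[R]_(n, m)) : Prop :=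
  proper_splitting A U V /\ mx_nonneg (Ud *m V).

Definition pns_typeII m n (A U V : 'M[R]_(m, n)) (Ud : 'M[R]_(n, m)) : Prop :=
  proper_splitting A U V /\ mx_nonneg (V *m Ud).

End Defs.

(* Main.v *)
Require Import Defs.
From HB Require Import structures.
From mathcomp Require Import all_boot all_order all_algebra.
From mathcomp Require Import complex.
From mathcomp Require Import polyrcf.
From mathcomp.algebra_tactics Require Import ring lra.
Import Order.TTheory GRing.Theory Num.Theory.
Local Open Scope ring_scope.
Set Implicit Arguments. Unset Strict Implicit. Unset Printing Implicit Defensive.

Section Spec.
Variable R : rcfType.
Local Notation C := (R[i]).
Local Notation nc := (@ComplexField.Normc.normc R).
Local Notation Mc M := (map_mx (real_complex R) M).

Definition spec n (M : 'M[R]_n) : seq C :=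
  sval (closed_field_poly_normal (char_poly (Mc M))).

Lemma specP n (M : 'M[R]_n) (l : C) :
  reflect (exists2 v : 'rV[C]_n, v *m Mc M = l *: v & v != 0) (l \in spec M).
Proof.
rewrite /spec; case: closed_field_poly_normal => /= r Hr.
have -> : (l \in r) = root (char_poly (Mc M)) l.
  rewrite [in RHS]Hr rootZ ?root_prod_XsubC //.
  by rewrite (monicP (char_poly_monic _)) oner_eq0.
by rewrite -eigenvalue_root_char; apply: eigenvalueP.
Qed.

Lemma srE n (M : 'M[R]_n) :
  spectral_radius M = \big[Num.max/0]_(z <- spec M) nc z.
Proof. by []. Qed.

Lemma sr_ge0 n (M : 'M[R]_n) : 0 <= spectral_radius M.
Proof.
rewrite srE; elim: (spec M) => [|a s IH]; first by rewrite big_nil.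
by rewrite big_cons le_max IH orbT.
Qed.

Lemma sr_le n (M : 'M[R]_n) l : l \in spec M -> nc l <= spectral_radius M.
Proof.
rewrite srE; elim: (spec M) => [|a s IH] //=.
rewrite inE big_cons le_max => /orP[/eqP->|/IH ->]; first by rewrite lexx.
by rewrite orbT.
Qed.

Lemma sr_ub n (M : 'M[R]_n) x : 0 <= x -> (forall l, l \in spec M -> nc l <= x) ->
  spectral_radius M <= x.
Proof.
rewrite srE => x0; elim: (spec M) => [|a s IH] H; first by rewrite big_nil.
rewrite big_cons ge_max H ?mem_head // IH // => l ls.
by apply: H; rewrite inE ls orbT.
Qed.

Lemma sr_att n (M : 'M[R]_n) : 0 < spectral_radius M ->
  exists2 l, l \in spec M & nc l = spectral_radius M.
Proof.
rewrite srE; elim: (spec M) => [|a s IH]; first by rewrite big_nil ltxx.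
rewrite big_cons.
have [le|lt] := leP (\big[Num.max/0]_(z <- s) nc z) (nc a) => H.
  by exists a; first by rewrite mem_head.
by have [l ls <-] := IH H; exists l => //; rewrite inE ls orbT.
Qed.

End Spec.

Section Vec.
Variable R : rcfType.
Local Notation C := (R[i]).
Local Notation nc := (@ComplexField.Normc.normc R).
Local Notation Mc M := (map_mx (real_complex R) M).

Lemma nc_real (a : R) : nc (real_complex R a) = `|a|.
Proof. by rewrite /= expr0n /= addr0 sqrtr_sqr. Qed.

Lemma nc_ge0 (z : C) : 0 <= nc z.
Proof. by case: z => a b /=; rewrite sqrtr_ge0. Qed.

Lemma nc_sum (I : Type) (r : seq I) (P : pred I) (f : I -> C) :
  nc (\sum_(i <- r | P i) f i) <= \sum_(i <- r | P i) nc (f i).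
Proof.
apply: (big_ind2 (fun (c : C) (x : R) => nc c <= x)).
- by rewrite ComplexField.Normc.normc0.
- move=> c1 x1 c2 x2 h1 h2; apply: le_trans (le_normcD _ _) _; exact: lerD.
- by move=> i _.
Qed.

Lemma mx_le_refl m n (A : 'M[R]_(m, n)) : mx_le A A.
Proof. by move=> i j. Qed.

Lemma mx_le_trans m n (A B D : 'M[R]_(m, n)) : mx_le A B -> mx_le B D -> mx_le A D.
Proof. by move=> h1 h2 i j; apply: le_trans (h1 i j) (h2 i j). Qed.

Lemma mulmx_le_l m n p (P : 'M[R]_(m, n)) (A B : 'M[R]_(n, p)) :
  mx_nonneg P -> mx_le A B -> mx_le (P *m A) (P *m B).
Proof.
move=> hP hAB i j; rewrite !mxE; apply: ler_sum => k _.
by apply: ler_wpM2l.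
Qed.

Lemma mulmx_le_r m n p (P : 'M[R]_(n, p)) (A B : 'M[R]_(m, n)) :
  mx_nonneg P -> mx_le A B -> mx_le (A *m P) (B *m P).
Proof.
move=> hP hAB i j; rewrite !mxE; apply: ler_sum => k _.
by apply: ler_wpM2r.
Qed.

Lemma mulmx_nonneg m n p (A : 'M[R]_(m, n)) (B : 'M[R]_(n, p)) :
  mx_nonneg A -> mx_nonneg B -> mx_nonneg (A *m B).
Proof.
move=> hA hB i j; rewrite mxE; apply: sumr_ge0 => k _; exact: mulr_ge0.
Qed.

Definition nv n (v : 'rV[C]_n) : 'rV[R]_n := map_mx nc v.

Lemma nv_ge0 n (v : 'rV[C]_n) : mx_nonneg (nv v).
Proof. by move=> i j; rewrite mxE nc_ge0. Qed.

Lemma nv_eq0 n (v : 'rV[C]_n) : nv v = 0 -> v = 0.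
Proof.
move=> h; apply/matrixP => i j; rewrite mxE.
apply: ComplexField.Normc.eq0_normc.
by have := congr1 (fun M : 'rV[R]_n => M i j) h; rewrite !mxE.
Qed.

Lemma nv_mul n (v : 'rV[C]_n) (B : 'M[R]_n) :
  mx_nonneg B -> mx_le (nv (v *m Mc B)) (nv v *m B).
Proof.
move=> hB i j; rewrite !mxE; apply: le_trans (nc_sum _ _ _) _.
apply: ler_sum => k _; rewrite !mxE ComplexField.Normc.normcM nc_real.
by rewrite ger0_norm.
Qed.

Lemma nv_scale n (v : 'rV[C]_n) (l : C) : nv (l *: v) = nc l *: nv v.
Proof. by apply/matrixP => i j; rewrite !mxE ComplexField.Normc.normcM. Qed.

Lemma eig_ineq n (v : 'rV[C]_n) (B : 'M[R]_n) (l : C) :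
  mx_nonneg B -> v *m Mc B = l *: v -> mx_le (nc l *: nv v) (nv v *m B).
Proof. by move=> hB e; rewrite -nv_scale -e; apply: nv_mul. Qed.

Lemma minprinc n (N : 'M[R]_n) (x : 'rV[R]_n) : mx_nonneg N ->
  (forall j, \sum_i N i j < 1) -> mx_nonneg (x *m (1%:M - N)) -> mx_nonneg x.
Proof.
move=> hN hs hx.
case: n N x hN hs hx => [|n] N x hN hs hx i j1; first by case: j1.
have [j0 hmin] : exists j0, forall j, x 0 j0 <= x 0 j.
  exists [arg min_(k < (ord0 : 'I_n.+1)) x 0 k]%O.
  by case: arg_minP => // j2 _ h j; apply: h.
suff : 0 <= x 0 j0 by move=> h; rewrite (ord1 i); apply: le_trans h (hmin j1).
have e : (x *m (1%:M - N)) 0 j0 = x 0 j0 - \sum_i x 0 i * N i j0.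
  by rewrite mulmxBr mulmx1 !mxE.
have := hx 0 j0; rewrite e => h0.
rewrite leNgt; apply/negP => hneg.
have h1 : x 0 j0 * \sum_i N i j0 <= \sum_i x 0 i * N i j0.
  rewrite mulr_sumr; apply: ler_sum => i1 _; apply: ler_wpM2r => //.
have h2 := hs j0.
have h3 : 0 <= \sum_i N i j0 by apply: sumr_ge0.
nra.
Qed.

Lemma inv_uniq n (A Y : 'M[R]_n) : A \in unitmx -> Y *m A = 1%:M -> invmx A = Y.
Proof.
move=> u e; have -> : Y = Y *m (A *m invmx A) by rewrite mulmxV // mulmx1.
by rewrite mulmxA e mul1mx.
Qed.

Lemma zmat_inv n (N : 'M[R]_n) : mx_nonneg N ->
  (forall j, \sum_i N i j < 1) ->
  (1%:M - N) \in unitmx /\ mx_nonneg (invmx (1%:M - N)).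
Proof.
move=> hN hs.
have inj : forall v : 'rV[R]_n, v *m (1%:M - N) = 0 -> v = 0.
  move=> v e; have h1 : mx_nonneg v by apply: minprinc hN hs _; rewrite e => i j; rewrite mxE.
  have h2 : mx_nonneg (- v).
    by apply: minprinc hN hs _; rewrite mulNmx e oppr0 => i j; rewrite mxE.
  apply/matrixP => i j; rewrite mxE; apply/eqP; rewrite eq_le h1 andbT.
  by have := h2 i j; rewrite mxE oppr_ge0.
have u : (1%:M - N) \in unitmx.
  rewrite unitmxE unitfE; apply/negP => /det0P [v vn0 e].
  by move: vn0; rewrite (inj v e) eqxx.
split => // i j.
have e : ((delta_mx 0 i : 'rV[R]_n) *m invmx (1%:M - N)) *m (1%:M - N) = (delta_mx 0 i : 'rV[R]_n).
  by rewrite -mulmxA mulVmx // mulmx1.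
have hx : mx_nonneg ((delta_mx 0 i : 'rV[R]_n) *m invmx (1%:M - N)).
  apply: minprinc hN hs _; rewrite e => a b; rewrite mxE; case: (_ == _); case: (_ == _) => //=.
have := hx 0 j; rewrite -rowE mxE //.
Qed.

End Vec.

Section Core.
Variable R : rcfType.
Variables (n : nat) (B : 'M[R]_n) (s : R).
Hypothesis hB : mx_nonneg B.
Hypothesis hs : 0 < s.
Hypothesis hU : forall u, s <= u -> (u%:M - B) \in unitmx.

Let H t : 'M[R]_n := s%:M - t *: B.

Let good t := H t \in unitmx /\ mx_nonneg (invmx (H t)).

Lemma Hunit t : 0 <= t -> t <= 1 -> H t \in unitmx.
Proof.
move=> t0 t1; have [->|tp] := eqVneq t 0.
  rewrite /H scale0r subr0 unitmxE det_scalar unitfE expf_neq0 //.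
  by rewrite gt_eqF.
have tpos : 0 < t by rewrite lt_def tp t0.
have -> : H t = t *: ((s / t)%:M - B).
  by rewrite /H scalerBr scale_scalar_mx mulrC divfK.
rewrite unitmxZ ?unitfE // hU //.
rewrite ler_pdivlMr //.
have : 0 <= s * (1 - t) by rewrite mulr_ge0 ?subr_ge0 // ltW.
lra.
Qed.

Lemma good0 : good 0.
Proof.
have e : H 0 = s%:M by rewrite /H scale0r subr0.
split; first exact: Hunit.
by rewrite e invmx_scalar => i j; rewrite mxE mulrn_wge0 // invr_ge0 ltW.
Qed.

Lemma LS c : good c -> exists2 h, 0 < h & forall u, c <= u -> u <= c + h -> good u.
Proof.
move=> [uc hW]; set W := invmx (H c).
set K := W *m B.
have hK : mx_nonneg K by apply: mulmx_nonneg.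
set S := \sum_j \sum_i K i j.
have S0 : 0 <= S by apply: sumr_ge0 => j _; apply: sumr_ge0.
have colS : forall j, \sum_i K i j <= S.
  move=> j; rewrite /S [X in _ <= X](bigD1 j) //= lerDl; apply: sumr_ge0 => k _.
  by apply: sumr_ge0.
exists (1 + S)^-1; first by rewrite invr_gt0; lra.
move=> u cu uch.
set N := (u - c) *: K.
have hN : mx_nonneg N by move=> i j; rewrite mxE mulr_ge0 // subr_ge0.
have hcol : forall j, \sum_i N i j < 1.
  move=> j; have -> : \sum_i N i j = (u - c) * \sum_i K i j.
    by rewrite mulr_sumr; apply: eq_bigr => i _; rewrite mxE.
  have := colS j; have : 0 <= \sum_i K i j by apply: sumr_ge0.
  have : (u - c) * (1 + S) <= 1.
    have h : (u - c) * (1 + S) <= (1 + S)^-1 * (1 + S) by apply: ler_wpM2r; lra.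
    by rewrite mulVf in h => //; rewrite gt_eqF //; lra.
  move=> h1 h2 h3; nra.
have [uN hX] := zmat_inv hN hcol.
have eH : H u = H c *m (1%:M - N).
  rewrite mulmxBr mulmx1 /N -scalemxAr /K mulmxA mulmxV // mul1mx.
  by rewrite /H -addrA -opprD -scalerDl; congr (_ - _ *: _); ring.
have uu : H u \in unitmx by rewrite eH unitmx_mul uc uN.
split => //.
have -> : invmx (H u) = invmx (1%:M - N) *m W.
  apply: inv_uniq => //; rewrite eH -mulmxA (mulmxA W) mulVmx // mul1mx.
  by rewrite mulVmx.
exact: mulmx_nonneg.
Qed.


Let P : 'M[{poly R}]_n := \matrix_(i, j) (((s%:M : 'M[R]_n) i j)%:P - 'X * (B i j)%:P).

Lemma Peval t : map_mx (horner_eval t) P = H t.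
Proof.
apply/matrixP => i j; rewrite !mxE horner_evalE.
by rewrite hornerD hornerN hornerM hornerX !hornerC.
Qed.

Let D := \det P.
Let F := \adj P.

Lemma detE t : D.[t] = \det (H t).
Proof. by rewrite -Peval det_map_mx. Qed.

Lemma adjE t i j : (F i j).[t] = \adj (H t) i j.
Proof. by rewrite -Peval -map_mx_adj [RHS]mxE. Qed.

Lemma Dpos t : 0 <= t -> t <= 1 -> 0 < D.[t].
Proof.
move=> t0 t1.
have nz : forall x, 0 <= x -> x <= 1 -> D.[x] != 0.
  by move=> x x0 x1; rewrite detE -unitfE -unitmxE Hunit.
have D0 : 0 < D.[0].
  by rewrite detE /H scale0r subr0 det_scalar exprn_gt0.
rewrite lt_def nz //=; rewrite leNgt; apply/negP => neg.
have [x xin rx] : {x | x \in `[0, t] & root D x}.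
  by apply: polyrcf.poly_ivt => //; rewrite pmulr_rle0 //; exact: ltW.
move: xin; rewrite in_itv /= => /andP[x0 xt].
by move: (nz x x0 (le_trans xt t1)); rewrite -rootE rx.
Qed.


Lemma invE t : 0 <= t -> t <= 1 -> forall i j, invmx (H t) i j = (D.[t])^-1 * (F i j).[t].
Proof. by move=> t0 t1 i j; rewrite /invmx Hunit // mxE detE adjE. Qed.

Lemma good_of t : 0 <= t -> t <= 1 -> (forall i j, 0 <= (F i j).[t]) -> good t.
Proof.
move=> t0 t1 h; split; first exact: Hunit.
by move=> i j; rewrite invE // mulr_ge0 // invr_ge0 ltW // Dpos.
Qed.

Lemma of_good t : 0 <= t -> t <= 1 -> good t -> forall i j, 0 <= (F i j).[t].
Proof.
by move=> t0 t1 [_ g] i j; have := g i j; rewrite invE // pmulr_rge0 // invr_gt0 Dpos.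
Qed.

Let Q := \prod_(k : 'I_n * 'I_n | F k.1 k.2 != 0) F k.1 k.2.

Lemma Qnz : Q != 0.
Proof. by apply/prodf_neq0 => k. Qed.

Lemma rootQ i j x : F i j != 0 -> root (F i j) x -> root Q x.
Proof. by move=> nz rx; rewrite /Q (bigD1 (i, j)) //= rootM rx. Qed.

Lemma fin c t : 0 <= c -> c < t -> t <= 1 -> good c ->
  (forall z, c < z -> z < t -> ~~ root Q z) -> good t.
Proof.
move=> c0 ct t1 gc nr.
have [h h0 hh] := LS gc.
pose b := Num.min (c + h) ((c + t) / 2).
have cb : c < b by rewrite lt_min; apply/andP; split; lra.
have bt : b < t.
  have : b <= (c + t) / 2 by rewrite ge_min lexx orbT.
  lra.
have bch : b <= c + h by rewrite ge_min lexx.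
have gb := hh b (ltW cb) bch.
have Fb := of_good (ltW (le_lt_trans c0 cb)) (ltW (lt_le_trans bt t1)) gb.
apply: good_of => //; first by lra.
move=> i j; have [Fz|Fnz] := eqVneq (F i j) 0; first by rewrite Fz horner0.
rewrite leNgt; apply/negP => neg.
have [x xin rx] : {x | x \in `[b, t] & root (F i j) x}.
  apply: polyrcf.poly_ivt; first exact: ltW.
  by rewrite mulr_ge0_le0 // ltW.
move: xin; rewrite in_itv /= => /andP[bx xt].
have xt' : x < t.
  rewrite lt_neqAle xt andbT; apply/eqP => ex; move: rx.
  by rewrite ex rootE lt_eqF.
by move: (nr x (lt_le_trans cb bx) xt'); rewrite (rootQ Fnz rx).
Qed.

Lemma step t : 0 <= t -> t <= 1 ->
  (forall c, 0 < c -> c < t -> root Q c -> good c) -> good t.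
Proof.
move=> t0 t1 hyp; have [->|tp] := eqVneq t 0; first exact: good0.
have tpos : 0 < t by rewrite lt_def tp t0.
case: (prev_rootP Q 0 t) => [Q0|y _ Qy yin nr|c _ ec nr].
- by move: Qnz; rewrite Q0 eqxx.
- move: yin; rewrite in_itv /= => /andP[y0 yt].
  apply: (fin (ltW y0) yt t1); first by apply: hyp => //; rewrite rootE Qy.
  by move=> z yz zt; apply: nr; rewrite in_itv /= yz zt.
- apply: (fin (lexx 0) tpos t1 good0) => z z0 zt.
  by apply: nr; rewrite in_itv /= z0 zt.
Qed.

Lemma count_lt (L : seq R) c t : c < t -> c \in L ->
  (count (fun z : R => (z < c)%R) L < count (fun z : R => (z < t)%R) L)%N.
Proof.
move=> ct; elim: L => //= a L IH; rewrite inE => /orP[/eqP <-|cL].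
  rewrite ltxx ct /= add0n add1n ltnS; apply: sub_count => z /= zc.
  exact: lt_trans zc ct.
have h1 : (nat_of_bool (a < c)%R <= nat_of_bool (a < t)%R)%N.
  by case: (ltP a c) => //= ac; rewrite (lt_trans ac ct).
by rewrite -addnS; apply: leq_add h1 (IH cL).
Qed.

Lemma all_good k : forall t, 0 <= t -> t <= 1 ->
  (count (fun z : R => (z < t)%R) (roots Q 0 2) <= k)%N -> good t.
Proof.
elim: k => [|k IH] t t0 t1 hk; apply: step => // c c0 ct rc;
  have cL : c \in roots Q 0 2 by
    apply: root_in_roots Qnz _ _ rc; rewrite in_itv /= c0 /=; lra.
  by have := leq_trans (count_lt ct cL) hk.
apply: IH; [exact: ltW | lra |].
by rewrite -ltnS (leq_trans (count_lt ct cL) hk).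
Qed.

Lemma core : (s%:M - B) \in unitmx /\ mx_nonneg (invmx (s%:M - B)).
Proof.
have := @all_good _ 1 ler01 (lexx 1) (leqnn _).
by rewrite /good /H scale1r.
Qed.

End Core.

Section SpecLemmas.
Variable R : rcfType.
Local Notation C := (R[i]).
Local Notation nc := (@ComplexField.Normc.normc R).
Local Notation Mc M := (map_mx (real_complex R) M).
Local Notation rho := spectral_radius.

Lemma real_eig n (B : 'M[R]_n) (u : R) (v : 'rV[R]_n) :
  v != 0 -> v *m B = u *: v -> real_complex R u \in spec B.
Proof.
move=> vn0 e; apply/specP; exists (Mc v); last by rewrite map_mx_eq0.
by rewrite -map_mxM e map_mxZ.
Qed.

Lemma nonunit_spec n (B : 'M[R]_n) u :
  ~~ ((u%:M - B) \in unitmx) -> real_complex R u \in spec B.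
Proof.
rewrite unitmxE unitfE negbK => /det0P [v vn0 e].
apply: real_eig vn0 _; move/eqP: e; rewrite mulmxBr mul_mx_scalar subr_eq0.
by move/eqP.
Qed.

Lemma sub_inv n (Cm : 'M[R]_n) (y : 'rV[R]_n) (a s : R) :
  mx_nonneg y -> y != 0 -> mx_le (a *: y) (y *m Cm) ->
  (s%:M - Cm) \in unitmx -> mx_nonneg (invmx (s%:M - Cm)) -> a < s.
Proof.
move=> hy yn0 hle u hW; rewrite ltNge; apply/negP => sa.
set W := invmx (s%:M - Cm).
have h1 : mx_le (y *m (s%:M - Cm)) ((s - a) *: y).
  move=> i j; rewrite mulmxBr mul_mx_scalar !mxE.
  have := hle i j; rewrite !mxE; lra.
have h2 := mulmx_le_r hW h1.
rewrite -mulmxA mulmxV // mulmx1 -scalemxAl in h2.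
have yW : mx_nonneg (y *m W) by apply: mulmx_nonneg.
move/negP: yn0; apply; apply/eqP/matrixP => i j; rewrite mxE.
apply/eqP; rewrite eq_le hy andbT; apply: le_trans (h2 i j) _.
rewrite mxE; apply: mulr_le0_ge0 => //; lra.
Qed.

Lemma inv_spec n (B : 'M[R]_n) s : mx_nonneg B ->
  (s%:M - B) \in unitmx -> mx_nonneg (invmx (s%:M - B)) ->
  forall l, l \in spec B -> nc l < s.
Proof.
move=> hB u hW l /specP [v e vn0].
apply: (sub_inv (nv_ge0 v) _ (eig_ineq hB e) u hW).
by apply/negP => /eqP /nv_eq0 v0; move: vn0; rewrite v0 eqxx.
Qed.

Lemma sr_lt n (B : 'M[R]_n) s : mx_nonneg B -> 0 < s ->
  (forall u, s <= u -> (u%:M - B) \in unitmx) -> rho B < s.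
Proof.
move=> hB hs hU; have [u hW] := core hB hs hU.
have hl := inv_spec hB u hW.
have [rp|] := ltP 0 (rho B); last by move=> h; apply: le_lt_trans h hs.
by have [l ls <-] := sr_att rp; apply: hl.
Qed.

Lemma PF1 n (T : 'M[R]_n) : mx_nonneg T -> 0 < rho T ->
  real_complex R (rho T) \in spec T.
Proof.
move=> hT rp; case: (boolP (_ \in _)) => // nin.
have : rho T < rho T; last by rewrite ltxx.
apply: sr_lt => // u ru; apply/negP => /negP nu.
have := nonunit_spec nu; have [->|ne] := eqVneq u (rho T).
  by rewrite (negPf nin).
move=> /sr_le; rewrite nc_real ger0_norm; last by apply: le_trans ru; apply: sr_ge0.
by move=> h; move: ne; rewrite eq_le h ru.
Qed.

Lemma core_spec n (B : 'M[R]_n) s : mx_nonneg B -> 0 < s ->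
  (forall l, l \in spec B -> nc l < s) ->
  (s%:M - B) \in unitmx /\ mx_nonneg (invmx (s%:M - B)).
Proof.
move=> hB hs hl; apply: core => // u su; apply/negP => /negP nu.
have := hl _ (nonunit_spec nu); rewrite nc_real ger0_norm; last by lra.
lra.
Qed.

Lemma neumann n (T : 'M[R]_n) : mx_nonneg T -> rho T < 1 ->
  (1%:M - T) \in unitmx /\ mx_nonneg (invmx (1%:M - T)).
Proof.
move=> hT r1; apply: core_spec => // l ls.
by apply: le_lt_trans (sr_le ls) r1.
Qed.

Lemma PF2 n (B Cm : 'M[R]_n) : mx_nonneg B -> mx_le B Cm -> rho B <= rho Cm.
Proof.
move=> hB hBC; apply: sr_ub; first exact: sr_ge0.
move=> l ls; rewrite leNgt; apply/negP => lt.
have hC : mx_nonneg Cm by move=> i j; apply: le_trans (hB i j) (hBC i j).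
have s0 : 0 < nc l by apply: le_lt_trans (sr_ge0 Cm) lt.
have [u hW] : ((nc l)%:M - Cm) \in unitmx /\ mx_nonneg (invmx ((nc l)%:M - Cm)).
  apply: core => // u su; apply/negP => /negP nu.
  have := sr_le (nonunit_spec nu); rewrite nc_real ger0_norm; last by lra.
  lra.
move: ls => /specP [v e vn0].
have yn0 : nv v != 0.
  by apply/negP => /eqP /nv_eq0 v0; move: vn0; rewrite v0 eqxx.
have hle : mx_le (nc l *: nv v) (nv v *m Cm).
  apply: mx_le_trans (eig_ineq hB e) _; apply: mulmx_le_l => //; exact: nv_ge0.
by have := sub_inv (nv_ge0 v) yn0 hle u hW; rewrite ltxx.
Qed.

Lemma sr_swap p q (X : 'M[R]_(p, q)) (Y : 'M[R]_(q, p)) :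
  rho (X *m Y) <= rho (Y *m X).
Proof.
apply: sr_ub; first exact: sr_ge0.
move=> l /specP [v e vn0].
have [->|ln0] := eqVneq l 0; first by rewrite ComplexField.Normc.normc0 sr_ge0.
apply: sr_le; apply/specP; exists (v *m Mc X).
  by rewrite map_mxM !mulmxA -(mulmxA v) -map_mxM e -scalemxAl.
apply/negP => /eqP w0; move: e; rewrite map_mxM mulmxA w0 mul0mx => /eqP.
by rewrite eq_sym scaler_eq0 (negPf ln0) (negPf vn0).
Qed.

Lemma sr_swapE p q (X : 'M[R]_(p, q)) (Y : 'M[R]_(q, p)) :
  rho (X *m Y) = rho (Y *m X).
Proof. by apply/eqP; rewrite eq_le !sr_swap. Qed.

Lemma sr_scale n (M : 'M[R]_n) (c : R) : 0 < c -> rho (c *: M) <= c * rho M.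
Proof.
move=> c0; apply: sr_ub; first by rewrite mulr_ge0 ?sr_ge0 // ltW.
move=> l /specP [v e vn0].
have cn0 : real_complex R c != 0 by rewrite fmorph_eq0 gt_eqF.
have ls : l / real_complex R c \in spec M.
  apply/specP; exists v => //.
  move: e; rewrite map_mxZ -scalemxAr => e.
  by rewrite -[v *m _](scalerK cn0) e scalerA mulrC.
have := sr_le ls; rewrite ComplexField.Normc.normcM ComplexField.Normc.normcV nc_real.
rewrite ger0_norm; last exact: ltW.
move=> h; have h' := ler_wpM2l (ltW c0) h.
by rewrite mulrCA divff ?gt_eqF // mulr1 in h'.
Qed.

End SpecLemmas.

Lemma zlem (V : zmodType) (v w : V) : w = - v - - w -> v = 0.
Proof.
move=> e; rewrite opprK in e; apply/eqP; rewrite -oppr_eq0; apply/eqP.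
by apply: (addIr w); rewrite add0r -e.
Qed.

Lemma lmlem (K : fieldType) (V : lmodType K) (v w : V) (mu : K) :
  w = mu *: v - mu *: w -> 1 + mu != 0 -> w = (mu / (1 + mu)) *: v.
Proof.
move=> e nz; have h : (1 + mu) *: w = mu *: v by rewrite scalerDl scale1r {1}e subrK.
by rewrite -[w](scalerK nz) h scalerA mulrC.
Qed.

Section Rel.
Variable R : rcfType.
Local Notation C := (R[i]).
Local Notation nc := (@ComplexField.Normc.normc R).
Local Notation Mc M := (map_mx (real_complex R) M).
Local Notation rho := spectral_radius.

Lemma rel_up n (P G : 'M[R]_n) : rho P < 1 -> G *m (1%:M - P) = P ->
  rho G <= rho P / (1 - rho P).
Proof.
move=> r1 hG; have r0 := sr_ge0 P.
apply: sr_ub; first by apply: divr_ge0 => //; lra.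
move=> mu /specP [v e vn0].
have hGc : Mc G *m (1%:M - Mc P) = Mc P by rewrite -[in RHS]hG map_mxM map_mxB map_mx1.
have ew : v *m Mc P = mu *: v - mu *: (v *m Mc P).
  by rewrite -{1}hGc mulmxA e -scalemxAl mulmxBr mulmx1 scalerBr.
have mu1 : 1 + mu != 0.
  apply/negP; rewrite addrC addr_eq0 => /eqP m1.
  move: ew; rewrite m1 !scaleN1r => /zlem v0.
  by move: vn0; rewrite v0 eqxx.
pose la := mu / (1 + mu).
have ls : la \in spec P by apply/specP; exists v => //; apply: lmlem.
have hl := sr_le ls.
have emu : mu * (1 - la) = la by rewrite /la; field.
have hm : nc mu * nc (1 - la) = nc la by rewrite -ComplexField.Normc.normcM emu.
have hb : 1 - nc la <= nc (1 - la).
  have := le_normcD (1 - la) la; rewrite subrK ComplexField.Normc.normc1; lra.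
have m0 := nc_ge0 mu; have a0 := nc_ge0 la.
rewrite ler_pdivlMr; last by lra.
have h1 : 0 <= nc mu * (rho P - nc la) by apply: mulr_ge0; lra.
have h2 : nc mu * (1 - nc la) <= nc mu * nc (1 - la) by apply: ler_wpM2l.
nra.
Qed.

Lemma rel_down n (P G : 'M[R]_n) : mx_nonneg P -> rho P < 1 ->
  G *m (1%:M - P) = P -> rho P / (1 - rho P) <= rho G.
Proof.
move=> hP r1 hG; have r0 := sr_ge0 P.
have [->|rn0] := eqVneq (rho P) 0; first by rewrite mul0r sr_ge0.
have rp : 0 < rho P by rewrite lt_def rn0 r0.
have /specP [v e vn0] := PF1 hP rp.
have [u hX] := neumann hP r1.
set X := invmx (1%:M - P).
have GX : G = P *m X by rewrite -hG -mulmxA mulmxV // mulmx1.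
set r := rho P in e r1 rn0 rp r0 *.
have e1 : v *m Mc (1%:M - P) = real_complex R (1 - r) *: v.
  by rewrite map_mxB map_mx1 mulmxBr mulmx1 e rmorphB rmorph1 scalerBl scale1r.
have nz : real_complex R (1 - r) != 0 by rewrite fmorph_eq0 subr_eq0 eq_sym lt_eqF.
have e2 : v *m Mc X = (real_complex R (1 - r))^-1 *: v.
  have hv : v = real_complex R (1 - r) *: (v *m Mc X).
    by rewrite scalemxAl -e1 -mulmxA -map_mxM mulmxV // map_mx1 mulmx1.
  by rewrite {2}hv scalerK.
have ls : real_complex R (r / (1 - r)) \in spec G.
  apply/specP; exists v => //.
  by rewrite GX map_mxM mulmxA e -scalemxAl e2 scalerA rmorphM rmorphV ?unitfE ?subr_eq0 1?eq_sym ?lt_eqF.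
have := sr_le ls; rewrite nc_real ger0_norm //.
by apply: divr_ge0 => //; lra.
Qed.

End Rel.

Section Alg.
Variable R : rcfType.
Local Notation rho := spectral_radius.

Lemma null_mul m n p (U A : 'M[R]_(m, n)) (M : 'M[R]_(n, p)) :
  null_eq U A -> U *m M = 0 -> A *m M = 0.
Proof.
move=> hN hU; apply/matrixP => i j.
have hx : U *m (M *m (delta_mx j 0 : 'M[R]_(p, 1))) = 0 by rewrite mulmxA hU mul0mx.
have := (hN _).1 hx; rewrite mulmxA -colE => h.
by have := congr1 (fun N : 'cV[R]_m => N i 0) h; rewrite !mxE.
Qed.

Lemma null_sym m n (U A : 'M[R]_(m, n)) : null_eq U A -> null_eq A U.
Proof. by move=> hN x; split => h; apply/(hN x). Qed.

Lemma MP_null m n (A U : 'M[R]_(m, n)) Ad Ud :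
  is_MP_inverse A Ad -> is_MP_inverse U Ud -> null_eq U A ->
  Ad *m A = Ud *m U /\ A *m (Ud *m U) = A.
Proof.
move=> [a1 a2 a3 a4] [u1 u2 u3 u4] hN.
have hA : A *m (Ud *m U) = A.
  have h0 : A *m (1%:M - Ud *m U) = 0.
    by apply: (null_mul hN); rewrite mulmxBr mulmx1 mulmxA u1 subrr.
  by rewrite mulmxBr mulmx1 in h0; apply/eqP; rewrite eq_sym -subr_eq0 h0.
have hU : U *m (Ad *m A) = U.
  have h0 : U *m (1%:M - Ad *m A) = 0.
    by apply: (null_mul (null_sym hN)); rewrite mulmxBr mulmx1 mulmxA a1 subrr.
  by rewrite mulmxBr mulmx1 in h0; apply/eqP; rewrite eq_sym -subr_eq0 h0.
split => //.
have e1 : Ad *m A = Ad *m A *m (Ud *m U) by rewrite -mulmxA hA.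
have e2 : Ud *m U = Ud *m U *m (Ad *m A) by rewrite -mulmxA hU.
by rewrite -a4 e1 trmx_mul u4 a4 -e2.
Qed.

Lemma MP_range m n (A U : 'M[R]_(m, n)) Ad Ud :
  is_MP_inverse A Ad -> is_MP_inverse U Ud -> range_eq U A ->
  A *m Ad = U *m Ud /\ U *m Ud *m A = A.
Proof.
move=> [a1 a2 a3 a4] [u1 u2 u3 u4]; rewrite /range_eq => /andP [h1 h2].
have [D1 eD1] := submxP h1; have [D2 eD2] := submxP h2.
have eA : A = U *m D2^T by rewrite -[A]trmxK eD2 trmx_mul trmxK.
have eU : U = A *m D1^T by rewrite -[U]trmxK eD1 trmx_mul trmxK.
have hA : U *m Ud *m A = A by rewrite {1}eA mulmxA u1 -eA.
have hU : A *m Ad *m U = U by rewrite {1}eU mulmxA a1 -eU.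
split => //.
have e1 : A *m Ad = U *m Ud *m (A *m Ad) by rewrite mulmxA hA.
have e2 : U *m Ud = A *m Ad *m (U *m Ud) by rewrite mulmxA hU.
by rewrite -a3 e1 trmx_mul a3 u3 -e2.
Qed.

Lemma relI m n (A U V : 'M[R]_(m, n)) Ad Ud :
  is_MP_inverse A Ad -> is_MP_inverse U Ud -> proper_splitting A U V ->
  (Ad *m V) *m (1%:M - Ud *m V) = Ud *m V.
Proof.
move=> hA hU [eA [hR hN]].
have [e1 _] := MP_null hA hU hN.
have [_ e2] := MP_range hA hU hR.
have [u1 u2 _ _] := hU.
have eV : V = U - A by rewrite eA opprB addrC subrK.
have UV : U *m (Ud *m V) = V.
  by rewrite mulmxA {1}eV mulmxBr u1 e2 eV.
have VV : V *m (Ud *m V) = V - A *m (Ud *m V) by rewrite {1}eV mulmxBl UV.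
rewrite mulmxBr mulmx1 -mulmxA VV mulmxBr (mulmxA Ad A) e1.
by rewrite (mulmxA (Ud *m U) Ud V) u2 opprB addrC subrK.
Qed.

Lemma relII m n (A U V : 'M[R]_(m, n)) Ad Ud :
  is_MP_inverse A Ad -> is_MP_inverse U Ud -> proper_splitting A U V ->
  (1%:M - V *m Ud) *m (V *m Ad) = V *m Ud.
Proof.
move=> hA hU [eA [hR hN]].
have [_ e1] := MP_null hA hU hN.
have [e2 _] := MP_range hA hU hR.
have [u1 u2 _ _] := hU.
have eV : V = U - A by rewrite eA opprB addrC subrK.
have VU : V *m Ud *m U = V by rewrite -mulmxA {1}eV mulmxBl mulmxA u1 e1 eV.
have VV : V *m Ud *m V = V - V *m Ud *m A by rewrite {2}eV mulmxBr VU.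
rewrite mulmxBl mul1mx mulmxA VV mulmxBl -(mulmxA _ A) e2.
by rewrite -(mulmxA V Ud) (mulmxA Ud U Ud) u2 opprB addrC subrK.
Qed.

Lemma commute_rel n (S K : 'M[R]_n) : (1%:M - S) \in unitmx ->
  (1%:M - S) *m K = S -> K *m (1%:M - S) = S.
Proof.
move=> u h.
have cS : (1%:M - S) *m S = S *m (1%:M - S) by rewrite mulmxBl mulmxBr mul1mx mulmx1.
have eK : invmx (1%:M - S) *m S = K by rewrite -{2}h mulKmx.
by rewrite -eK -mulmxA -cS mulmxA mulVmx // mul1mx.
Qed.

Lemma K_nonneg n (P K : 'M[R]_n) : mx_nonneg P -> rho P < 1 ->
  K *m (1%:M - P) = P -> mx_nonneg K.
Proof.
move=> hP r1 h; have [u hX] := neumann hP r1.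
have <- : P *m invmx (1%:M - P) = K by rewrite -{1}h -mulmxA mulmxV // mulmx1.
exact: mulmx_nonneg.
Qed.

Lemma fmono_lt (x y : R) : 0 <= x -> x < y -> y < 1 -> x / (1 - x) < y / (1 - y).
Proof.
move=> x0 xy y1.
rewrite ltr_pdivrMr; last by lra.
rewrite mulrAC ltr_pdivlMr; last by lra.
nra.
Qed.

Lemma final (r1 r2 g1 g2 a : R) : 0 <= r1 -> r1 < 1 -> 0 <= r2 -> r2 < 1 ->
  r1 / (1 - r1) <= g1 -> g1 <= a * g2 -> g2 <= r2 / (1 - r2) ->
  0 < a -> a <= 1 -> (0 < g1 \/ 0 < g2) ->
  (a = 1 -> r1 <= r2) /\ (a < 1 -> r1 < r2).
Proof.
move=> r10 r11 r20 r21 h1 h2 h3 a0 a1 hpos.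
have f10 : 0 <= r1 / (1 - r1) by apply: divr_ge0 => //; lra.
have g20 : 0 <= g2.
  rewrite leNgt; apply/negP => g2n.
  have : a * g2 < 0 by rewrite pmulr_rlt0.
  lra.
have h4 : a * g2 <= a * (r2 / (1 - r2)) by apply: ler_wpM2l => //; exact: ltW.
split.
  move=> ea; rewrite leNgt; apply/negP => lt.
  have := fmono_lt r20 lt r11; rewrite ea mul1r in h2; lra.
move=> alt.
have g2p : 0 < g2.
  case: hpos => // g1p; rewrite lt_def; apply/andP; split => //.
  by apply/eqP => e; rewrite e mulr0 in h2; lra.
have hlt : a * g2 < g2 by rewrite gtr_pMl.
rewrite ltNge; apply/negP => le.
have [e|lt] := eqVneq r1 r2.
  by rewrite e in h1; move: le; lra.
have lt' : r2 < r1 by rewrite lt_def lt le.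
have := fmono_lt r20 lt' r11; lra.
Qed.

End Alg.

Unset Implicit Arguments.

Theorem theorem4p6 (R : rcfType) (m n : nat)
  (A U1 V1 U2 V2 : 'M[R]_(m, n)) (Ad U1d U2d : 'M[R]_(n, m)) (alpha : R) :
  is_MP_inverse A Ad -> is_MP_inverse U1 U1d -> is_MP_inverse U2 U2d ->
  mx_nonneg Ad ->
  (pns_typeI A U1 V1 U1d /\ pns_typeII A U2 V2 U2d \/
   pns_typeII A U1 V1 U1d /\ pns_typeI A U2 V2 U2d) ->
  convergent_splitting U1 V1 U1d -> convergent_splitting U2 V2 U2d ->
  0 < alpha -> alpha <= 1 ->
  mx_le V1 (alpha *: V2) ->
  (0 < spectral_radius (Ad *m V1) \/ 0 < spectral_radius (Ad *m V2)) ->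
  (alpha = 1 ->
     spectral_radius (U1d *m V1) <= spectral_radius (U2d *m V2) /\
     spectral_radius (U2d *m V2) < 1) /\
  (alpha < 1 ->
     spectral_radius (U1d *m V1) < spectral_radius (U2d *m V2) /\
     spectral_radius (U2d *m V2) < 1).
Proof.
move=> hA hU1 hU2 hAd hcase c1 c2 a0 a1 hle hpos.
rewrite /convergent_splitting in c1 c2.
suff [g1 [g2 [h1 [h2 [h3 h4]]]]] : exists g1 g2,
    spectral_radius (U1d *m V1) / (1 - spectral_radius (U1d *m V1)) <= g1 /\
    g1 <= alpha * g2 /\
    g2 <= spectral_radius (U2d *m V2) / (1 - spectral_radius (U2d *m V2)) /\
    (0 < g1 \/ 0 < g2).
  have [f1 f2] := final (sr_ge0 _) c1 (sr_ge0 _) c2 h1 h2 h3 a0 a1 h4.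
  by split => h; split => //; [exact: f1 | exact: f2].
case: hcase => [[[sp1 nn1] [sp2 nn2]] | [[sp1 nn1] [sp2 nn2]]].
- have K1 := relI hA hU1 sp1.
  have K1n := K_nonneg nn1 c1 K1.
  exists (spectral_radius (Ad *m V1)), (spectral_radius (Ad *m V2)).
  split; first exact: rel_down nn1 c1 K1.
  split.
    apply: le_trans (sr_scale _ a0); apply: PF2 => //.
    by rewrite scalemxAr; apply: mulmx_le_l.
  split => //.
  have cS : spectral_radius (V2 *m U2d) < 1 by rewrite sr_swapE.
  have [u _] := neumann nn2 cS.
  have K2 := commute_rel u (relII hA hU2 sp2).
  by rewrite -sr_swapE -[spectral_radius (U2d *m V2)]sr_swapE; apply: rel_up.
- have cS : spectral_radius (V1 *m U1d) < 1 by rewrite sr_swapE.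
  have [u _] := neumann nn1 cS.
  have K1 := commute_rel u (relII hA hU1 sp1).
  have K1n := K_nonneg nn1 cS K1.
  exists (spectral_radius (V1 *m Ad)), (spectral_radius (Ad *m V2)).
  split; first by rewrite -sr_swapE; exact: rel_down nn1 cS K1.
  split.
    rewrite [spectral_radius (Ad *m V2)]sr_swapE; apply: le_trans (sr_scale _ a0); apply: PF2 => //.
    by rewrite scalemxAl; apply: mulmx_le_r.
  split; first by apply: rel_up c2 (relI hA hU2 sp2).
  by rewrite sr_swapE.
Qed.
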